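(* Let $0<\alpha \leq \beta \leq d$, let $Q_0\subset\mathbb{R}^d$ be a cube, and suppose $u \in BMO^\alpha(Q_0)$. Then $u \in BMO^\beta(Q_0)$ and $$\|u\|_{BMO^\beta(Q_0)} \leq C\|u\|_{BMO^\alpha(Q_0)}$$ for a constant $C=C(\alpha,\beta)>0$ independent of $u$.
   Context: For $\gamma\in(0,d]$: $\mathcal{H}^{\gamma}_{\infty}(E)= \inf \{\sum_{i} \omega_\gamma r_i^\gamma : E \subset \bigcup_{i} B(x_i,r_i) \}$, $\omega_\gamma= \pi^{\gamma/2}/\Gamma(\gamma/2+1)$. $f$ is $\mathcal{H}^\gamma_\infty$-quasicontinuous if for every $\epsilon>0$ there is an open $O$ with $\mathcal{H}^\gamma_\infty(O)<\epsilon$ and $f|_{O^c}$ continuous. Choquet integral: $\int_A f\,d\mathcal{H}^\gamma_\infty=\int_0^\infty \mathcal{H}^\gamma_\infty(\{x\in A: f(x)>t\})\,dt$ for $f\ge0$. $L^1(Q_0;\mathcal{H}^\gamma_\infty)$: quasicontinuous $f$ with $\int_{Q_0}|f|\,d\mathcal{H}^\gamma_\infty<\infty$. $\|u\|_{BMO^{\gamma}(Q_0)}= \sup_{Q} \inf_{c \in \mathbb{R}} l(Q)^{-\gamma} \int_{Q} |u-c| \,d\mathcal{H}^{\gamma}_\infty$ over finite subcubes $Q\subset Q_0$ with sides parallel to those of $Q_0$, $l(Q)$ = side length; $BMO^\gamma(Q_0)$ is the set of $u\in L^1(Q_0;\mathcal{H}^\gamma_\infty)$ with this finite. *)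

(* Defs.v *)
From HB Require Import structures.
From mathcomp Require Import all_boot all_order all_algebra.
From mathcomp Require Import all_classical all_reals all_analysis.
Set Implicit Arguments. Unset Strict Implicit. Unset Printing Implicit Defensive.
Import Order.TTheory GRing.Theory Num.Theory.
Import numFieldNormedType.Exports.
Local Open Scope classical_set_scope.
Local Open Scope ring_scope.

Section HausdorffBMO.
Variables (R : realType) (d : nat).
Notation pt := 'rV[R]_d.

Definition edist (x y : pt) : R :=
  Num.sqrt (\sum_(i < d) (x ord0 i - y ord0 i) ^+ 2).
Definition eball (x : pt) (r : R) : set pt := [set y | edist x y < r].

Definition Gamma (s : R) : R :=
  fine (\int[@lebesgue_measure R]_(t in `]0%R, +oo[%classic)
          ((t `^ (s - 1)) * expR (- t))%:E)%E.

Definition omega (g : R) : R := pi `^ (g / 2) / Gamma (g / 2 + 1).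

(* gamma-dimensional Hausdorff content (countable covers by balls;
   finite covers are included via zero radii) *)
Definition hcontent (g : R) (E : set pt) : \bar R :=
  ereal_inf [set S | exists (x : nat -> pt) (r : nat -> R),
    (forall i, 0 <= r i) /\ E `<=` \bigcup_i eball (x i) (r i) /\
    S = (\sum_(0 <= i <oo) (omega g * r i `^ g)%:E)%E].

Definition choquet (g : R) (A : set pt) (f : pt -> R) : \bar R :=
  (\int[@lebesgue_measure R]_(t in `[0%R, +oo[%classic)
      hcontent g [set x | A x /\ (t < f x)%R])%E.

Definition quasicont (g : R) (D : set pt) (f : pt -> R) : Prop :=
  forall e : R, 0 < e -> exists O : set pt,
    open O /\ (hcontent g O < e%:E)%E /\ {within D `\` O, continuous f}.

Definition L1H (g : R) (D : set pt) (f : pt -> R) : Prop :=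
  quasicont g D f /\ (choquet g D (fun x => `|f x|%R) < +oo)%E.

Definition cube (a : pt) (l : R) : set pt :=
  [set x | forall i : 'I_d, a ord0 i <= x ord0 i <= a ord0 i + l].

Definition bmo_norm (g : R) (Q0 : set pt) (u : pt -> R) : \bar R :=
  ereal_sup [set s | exists (a : pt) (l : R), 0 < l /\ cube a l `<=` Q0 /\
    s = ereal_inf [set v | exists c : R,
          v = ((l `^ (- g))%:E * choquet g (cube a l) (fun x => `|u x - c|%R))%E]].

Definition BMO (g : R) (Q0 : set pt) (u : pt -> R) : Prop :=
  L1H g Q0 u /\ (bmo_norm g Q0 u < +oo)%E.

End HausdorffBMO.

(* Main.v *)
Require Import Defs.
From HB Require Import structures.
From mathcomp Require Import all_boot all_order all_algebra.
From mathcomp Require Import all_classical all_reals all_analysis.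
From mathcomp Require Import ring lra.
From mathcomp Require Import measurable_realfun exponential_distribution.
Set Implicit Arguments. Unset Strict Implicit. Unset Printing Implicit Defensive.
Import Order.TTheory GRing.Theory Num.Theory.
Import numFieldNormedType.Exports.
Local Open Scope classical_set_scope.
Local Open Scope ring_scope.

Section G.
Variable R : realType.
Notation mu := (@lebesgue_measure R).

Lemma integrand_bound (p t : R) : 0 <= p -> 0 <= t ->
  t `^ p * expR (- t) <= (1 + 2 ^+ (Num.truncn p).+1 * ((Num.truncn p).+1)`!%:R) * expR (- (t / 2)).
Proof.
move=> p0 t0; set N := (Num.truncn p).+1.
have pN : p <= N%:R by apply/ltW; exact: truncnS_gt.
have h1 : t `^ p <= 1 + t ^+ N.
  have [t1|t1] := leP t 1.
    apply: le_trans (_ : 1 <= _); last by rewrite lerDl exprn_ge0.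
    have := @ge0_ler_powR R p p0 t 1; rewrite !nnegrE powR1 =>-> //; exact: ler01.
  rewrite -powR_mulrn//; apply: le_trans (_ : t `^ N%:R <= _); last by rewrite lerDr.
  by apply: ler_powR => //; exact: ltW.
have h2 : t ^+ N <= 2 ^+ N * N`!%:R * expR (t / 2).
  have := expR_ge1Dxn (Num.truncn p) (divr_ge0 t0 (ler0n R 2)).
  rewrite -/N => h; have h' : (t / 2) ^+ N / N`!%:R <= expR (t / 2).
    by apply: le_trans h; rewrite lerDr.
  have Nf : 0 < N`!%:R :> R by rewrite ltr0n fact_gt0.
  have -> : t ^+ N = 2 ^+ N * N`!%:R * ((t / 2) ^+ N / N`!%:R).
    rewrite expr_div_n; field; apply/andP; split; [exact: lt0r_neq0|by rewrite expf_neq0// pnatr_eq0].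
  by apply: ler_wpM2l => //; rewrite mulr_ge0 ?exprn_ge0// ltW.
have e1 : expR (t / 2) * expR (- t) = expR (- (t / 2)).
  by rewrite -expRD; congr expR; field.
have e2 : expR (- t) <= expR (- (t / 2)) by rewrite ler_expR; lra.
have E0 : 0 <= expR (- t) by exact: expR_ge0.
apply: le_trans (_ : (1 + t ^+ N) * expR (- t) <= _).
  by apply: ler_wpM2r.
apply: le_trans (_ : (1 + 2 ^+ N * N`!%:R * expR (t / 2)) * expR (- t) <= _).
  by apply: ler_wpM2r => //; rewrite lerD2l.
rewrite mulrDl mul1r -mulrA e1 mulrDl mul1r lerD2r //.
Qed.

Lemma Gamma_gt0 (s : R) : 1 <= s -> 0 < Gamma s.
Proof.
move=> s1; have p0 : 0 <= s - 1 by rewrite subr_ge0.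
set p := s - 1 in p0 *.
set N := (Num.truncn p).+1.
pose M : R := 1 + 2 ^+ N * N`!%:R.
have M0 : 0 < M by rewrite /M ltr_pwDl// mulr_ge0// exprn_ge0.
rewrite /Gamma -/p.
set f := fun t : R => (t `^ p * expR (- t))%:E.
have mfT : measurable_fun (setT : set R) f.
  apply/measurable_EFinP; apply: measurable_funM.
    exact: measurable_powR.
  apply: measurableT_comp => //; exact: oppr_measurable.
have mf : forall D : set R, measurable D -> measurable_fun D f.
  by move=> D mD; apply: measurable_funS mfT.
have f0 : forall t, (0 <= f t)%E by move=> t; rewrite lee_fin mulr_ge0 ?powR_ge0 ?expR_ge0.
set I := (\int[mu]_(t in _) _)%E.
have lo : ((expR (-2))%:E <= I)%E.
  apply: (@le_trans _ _ (\int[mu]_(t in `[1%R, 2%R]%classic) (expR (-2))%:E)%E).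
    rewrite integral_cst//= lebesgue_measure_itv/= ifT; last by rewrite -[X in (X < _)%E]/(1%R%:E) -[X in (_ < X)%E]/(2%R%:E) lte_fin ltr1n.
    match goal with |- context[(?a * ?b)%E] => set B := b end.
    have -> : B = 1%:E by rewrite /B -[LHS]/((2 - 1)%R%:E); congr EFin; lra.
    by rewrite mule1.
  apply: (@le_trans _ _ (\int[mu]_(t in `[1%R, 2%R]%classic) f t)%E).
    apply: ge0_le_integral => //; first exact: mf.
    move=> t; rewrite /= in_itv/= => /andP[t1 t2]; rewrite lee_fin.
    rewrite -[expR (-2)]mul1r; apply: ler_pM; rewrite ?ler01 ?expR_ge0//.
      have := @ge0_ler_powR R p p0 1 t; rewrite !nnegrE powR1; apply => //.
      exact: le_trans t1.
    by rewrite ler_expR lerN2.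
  apply: ge0_subset_integral => //; first exact: mf.
  by apply: subset_itv; rewrite bnd_simp.
have hi : (I <= (2 * M)%:E)%E.
  apply: (@le_trans _ _ (\int[mu]_(t in `]0%R, +oo[%classic) ((2 * M)%:E * (exponential_pdf (2^-1) t)%:E))%E).
    apply: ge0_le_integral => //.
    - by move=> t _; exact: f0.
    - exact: mf.
    - apply/measurable_EFinP => /=; apply: measurable_funM => //.
      apply: measurable_funS (measurable_exponential_pdf _) => //.
    move=> t; rewrite /= in_itv/= andbT => t0.
    rewrite exponential_pdfE; last exact: ltW.
    rewrite -EFinM lee_fin.
    apply: le_trans (integrand_bound p0 (ltW t0)) _.
    rewrite -/N -/M le_eqVlt; apply/orP; left; apply/eqP.
    by rewrite mulNr (mulrC _ t); field.
  have mpdf : measurable_fun [set: R] (EFin \o exponential_pdf (2^-1 : R)).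
    apply/measurable_EFinP; exact: measurable_exponential_pdf.
  rewrite ge0_integralZl_EFin//; first last.
  - by rewrite ltW// mulr_gt0.
  - exact: measurable_funS mpdf.
  - by move=> t _; rewrite lee_fin exponential_pdf_ge0// invr_ge0.
  rewrite -[X in (_ <= X)%E]mule1; apply: lee_wpmul2l; first by rewrite lee_fin ltW// mulr_gt0.
  rewrite -(@integral_exponential_pdf R (2^-1)); last by rewrite invr_gt0.
  apply: ge0_subset_integral => //.
  by move=> t _; rewrite lee_fin exponential_pdf_ge0// invr_ge0.
move: lo hi; case: I => [r| |]//= lo _.
by move: lo; rewrite lee_fin; apply: lt_le_trans; exact: expR_gt0.
Qed.
End G.
Section H.
Variables (R : realType) (d : nat).
Notation pt := 'rV[R]_d.

Lemma omega_gt0 (g : R) : 0 < g -> 0 < omega g.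
Proof.
move=> g0; rewrite /omega divr_gt0 ?powR_gt0 ?pi_gt0//.
by apply: Gamma_gt0; rewrite lerDr divr_ge0// ltW.
Qed.

Local Opaque omega powR.

Lemma hcontent_ge0 (g : R) (E : set pt) : 0 < g -> (0 <= hcontent g E)%E.
Proof.
move=> g0; apply: le_ereal_inf_tmp => _ [x [r [r0 [_ ->]]]].
apply: nneseries_ge0 => i _ _.
by rewrite lee_fin mulr_ge0 ?powR_ge0// ltW// omega_gt0.
Qed.

Lemma hcontent_le (g : R) (E F : set pt) : E `<=` F -> (hcontent g E <= hcontent g F)%E.
Proof.
move=> EF; apply: ereal_inf_le_tmp => _ [x [r [r0 [cov ->]]]].
by exists x, r; split => //; split => //; exact: subset_trans EF cov.
Qed.

Lemma hcontent_cover (g : R) (E : set pt) (x : nat -> pt) (r : nat -> R) :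
  (forall i, 0 <= r i) -> E `<=` \bigcup_i eball (x i) (r i) ->
  (hcontent g E <= \sum_(0 <= i <oo) (omega g * r i `^ g)%:E)%E.
Proof. by move=> r0 cov; apply: ereal_inf_lbound; exists x, r. Qed.

Lemma hcontent_ball (g : R) (E : set pt) x0 R0 : 0 < g -> 0 <= R0 ->
  E `<=` eball x0 R0 -> (hcontent g E <= (omega g * R0 `^ g)%:E)%E.
Proof.
move=> g0 R00 EB.
pose r := fun i : nat => if i == 0%N then R0 else 0.
have r0 : forall i, 0 <= r i by move=> [|i]; rewrite /r.
apply: le_trans (@hcontent_cover g E (fun _ => x0) r r0 _) _.
  by move=> y Ey /=; exists 0%N => //; rewrite /r /=; exact: EB.
rewrite (@nneseries_split _ _ 0 1); last first.
  by move=> k _; rewrite lee_fin mulr_ge0 ?powR_ge0// ltW// omega_gt0.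
rewrite add0n big_nat1 eseries0 ?adde0 //.
move=> [|i]// _ _; rewrite /r /= powR0 ?mulr0//; exact: lt0r_neq0.
Qed.

Lemma eK_lem (F : fieldType) (wa wb P y : F) : wa != 0 -> wb / wa * P * (wa * y) = wb * P * y.
Proof. by move=> h; field. Qed.

Lemma hcontent_cmp (a b : R) (E : set pt) x0 R0 : 0 < a -> a <= b -> 0 < R0 ->
  E `<=` eball x0 R0 ->
  (hcontent b E <= (omega b / omega a * R0 `^ (b - a))%:E * hcontent a E)%E.
Proof.
move=> a0 ab R00 EB.
have b0 : 0 < b by exact: lt_le_trans ab.
have wa := omega_gt0 a0; have wb := omega_gt0 b0.
have K0 : 0 < omega b / omega a * R0 `^ (b - a) := mulr_gt0 (divr_gt0 wb wa) (powR_gt0 _ R00).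
have eK : forall y, omega b / omega a * R0 `^ (b - a) * (omega a * y) = omega b * R0 `^ (b - a) * y.
  by move=> y; apply: eK_lem; exact: lt0r_neq0 wa.
move: (omega b / omega a * R0 `^ (b - a)) K0 eK => K K0 eK.
have key : forall s, [set S | exists (x : nat -> pt) (r : nat -> R),
    (forall i, 0 <= r i) /\ E `<=` \bigcup_i eball (x i) (r i) /\
    S = (\sum_(0 <= i <oo) (omega a * r i `^ a)%:E)%E] s ->
    (hcontent b E <= K%:E * s)%E.
  move=> _ [x [r [r0 [cov ->]]]].
  have tge0 : forall i, (0 <= (omega a * r i `^ a)%:E)%E.
    by move=> i; rewrite lee_fin; apply: mulr_ge0; [exact: ltW wa|exact: powR_ge0].
  case: (pselect (exists i, R0 <= r i)) => [[i Ri]|nR].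
    apply: le_trans (hcontent_ball b0 (ltW R00) EB) _.
    have -> : omega b * R0 `^ b = K * (omega a * R0 `^ a).
      rewrite eK -mulrA -powRD; first by rewrite subrK.
      by apply/implyP => _; exact: lt0r_neq0 R00.
    rewrite EFinM; apply: lee_wpmul2l; first by rewrite lee_fin; exact: ltW K0.
    apply: le_trans (_ : (omega a * r i `^ a)%:E <= _)%E.
      rewrite lee_fin; apply: ler_wpM2l; first exact: ltW wa.
      apply: ge0_ler_powR => //; [exact: ltW a0|rewrite nnegrE; exact: ltW|rewrite nnegrE; exact: r0].
    apply: le_trans (nneseries_lim_ge i.+1 (fun n _ _ => tge0 n)).
    rewrite big_nat_recr//= leeDr//; exact: sume_ge0.
  apply: le_trans (hcontent_cover b r0 cov) _.
  rewrite -nneseriesZl//; apply: lee_nneseries.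
    by move=> i _ _; rewrite lee_fin; apply: mulr_ge0; [exact: ltW wb|exact: powR_ge0].
  move=> i _; rewrite lee_fin eK.
  have [ri0|ri0] := eqVneq (r i) 0.
    rewrite ri0 powR0; last exact: lt0r_neq0 b0.
    rewrite mulr0; apply: mulr_ge0; last exact: powR_ge0.
    apply: mulr_ge0; [exact: ltW wb|exact: powR_ge0].
  have -> : r i `^ b = r i `^ (b - a) * r i `^ a.
    by rewrite -powRD ?subrK//; apply/implyP.
  rewrite mulrA; apply: ler_wpM2r; first exact: powR_ge0.
  apply: ler_wpM2l; first exact: ltW.
  apply: ge0_ler_powR; [by rewrite subr_ge0|by rewrite nnegrE; exact: r0|by rewrite nnegrE; exact: ltW|].
  by apply: ltW; rewrite ltNge; apply/negP => Rr; apply: nR; exists i.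
rewrite -lee_pdivrMl//; apply: le_ereal_inf_tmp => s Ss.
by rewrite lee_pdivrMl//; exact: key.
Qed.

End H.
Section C.
Variables (R : realType) (d : nat).
Notation pt := 'rV[R]_d.

Lemma noninc_emeasurable (D : set R) (h : R -> \bar R) : measurable D ->
  (forall x y, x <= y -> (h y <= h x)%E) -> measurable_fun D h.
Proof.
move=> mD hni; apply: (measurability _ (ErealGenOInfty.measurableE R)) => //.
move=> /= _ [_ [r ->] <-]; apply: measurableI => //.
apply: is_interval_measurable => x y /= hx hy z /andP[xz zy].
move: hx hy; rewrite !in_itv/= !andbT => hx hy.
exact: lt_le_trans hy (hni _ _ zy).
Qed.

Lemma choquet_cmp (a b : R) (A : set pt) (f : pt -> R) x0 R0 :
  0 < a -> a <= b -> 0 < R0 -> A `<=` eball x0 R0 ->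
  (choquet b A f <= (omega b / omega a * R0 `^ (b - a))%:E * choquet a A f)%E.
Proof.
move=> a0 ab R00 AB.
have b0 : 0 < b by exact: lt_le_trans ab.
have wa := omega_gt0 a0; have wb := omega_gt0 b0.
have K0 : 0 < omega b / omega a * R0 `^ (b - a) := mulr_gt0 (divr_gt0 wb wa) (powR_gt0 _ R00).
have hni : forall g x y : R, x <= y ->
  (hcontent g [set z | A z /\ (y < f z)%R] <= hcontent g [set z | A z /\ (x < f z)%R])%E.
  by move=> g x y xy; apply: hcontent_le => z [Az yz]; split => //; exact: le_lt_trans yz.
rewrite /choquet -ge0_integralZl_EFin//; first last.
- exact: ltW.
- by apply: noninc_emeasurable => //; exact: hni.
- by move=> t _; exact: hcontent_ge0.
apply: ge0_le_integral => //.
- by move=> t _; exact: hcontent_ge0.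
- by apply: noninc_emeasurable => //; exact: hni.
- apply: noninc_emeasurable => // x y xy; apply: lee_wpmul2l; first by rewrite lee_fin ltW.
  exact: hni.
move=> t _; apply: hcontent_cmp a0 ab R00 _.
by move=> z [Az _]; exact: AB.
Qed.

End C.
Section M.
Variables (R : realType) (d : nat).
Notation pt := 'rV[R]_d.

Lemma edist_lt (a y : pt) (m : R) : 0 < m ->
  (forall i : 'I_d, `|a ord0 i - y ord0 i| <= m) -> Defs.edist a y < m * (d%:R + 1).
Proof.
move=> m0 H; rewrite /Defs.edist.
have p0 : 0 < m * (d%:R + 1) by rewrite mulr_gt0// ltr_wpDl.
rewrite -[X in _ < X](@ger0_norm _ (m * (d%:R + 1))) ?ltW// -sqrtr_sqr ltr_sqrt ?exprn_gt0//.
apply: (@le_lt_trans _ _ (\sum_(i < d) m ^+ 2)).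
  apply: ler_sum => i _; have := H i; rewrite ler_norml => /andP[h1 h2]; nra.
rewrite sumr_const card_ord -[_ *+ d]mulr_natr.
have hd : 0 <= d%:R :> R by [].
have hm : 0 < m ^+ 2 by rewrite exprn_gt0.
rewrite exprMn ltr_pM2l//; nra.
Qed.

Lemma cube_sub_eball (a : pt) (l : R) : 0 < l -> cube a l `<=` eball a (l * (d%:R + 1)).
Proof.
move=> l0 x Qx; rewrite /eball /=; apply: edist_lt => // i.
have /andP[h1 h2] := Qx i.
rewrite distrC ger0_norm ?subr_ge0//; lra.
Qed.

Lemma ball_sub_eball (a : pt) (r : R) : 0 < r -> ball a r `<=` eball a (r * (d%:R + 1)).
Proof.
move=> r0 x [_ H]; rewrite /eball /=; apply: edist_lt => // i.
by apply: ltW; have := H ord0 i.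
Qed.

Lemma cube_sub_ball (a : pt) (l : R) : 0 < l -> cube a l `<=` ball a (2 * l).
Proof.
move=> l0 x Qx; split; first by rewrite mulr_gt0.
move=> i j; rewrite (ord1 i) /ball /=.
have /andP[h1 h2] := Qx j.
rewrite distrC ger0_norm ?subr_ge0//; lra.
Qed.

End M.
Lemma mul_lt_pinfty (R : realType) (K : R) (x : \bar R) : 0 <= K -> (x < +oo)%E -> (K%:E * x < +oo)%E.
Proof. by move=> K0 xoo; apply: lte_mul_pinfty => //; rewrite lee_fin. Qed.

Lemma eC_lem (F : comRingType) (x y z w : F) : x * (y * (z * w)) = y * w * (x * z).
Proof. by ring. Qed.

Theorem corollary1p6 (R : realType) (d : nat) (alpha beta : R) :
  0 < alpha -> alpha <= beta -> beta <= d%:R ->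
  exists C : R, 0 < C /\
    forall (a : 'rV[R]_d) (l : R), 0 < l ->
    forall u : 'rV[R]_d -> R,
      BMO alpha (cube a l) u ->
      BMO beta (cube a l) u /\
      (bmo_norm beta (cube a l) u <= C%:E * bmo_norm alpha (cube a l) u)%E.
Proof.
move=> a0 ab bd.
have b0 : 0 < beta by exact: lt_le_trans ab.
have wa := omega_gt0 a0; have wb := omega_gt0 b0.
have d10 : 0 < d%:R + 1 :> R by rewrite ltr_wpDl.
pose C := omega beta / omega alpha * (d%:R + 1) `^ (beta - alpha).
have C0 : 0 < C := mulr_gt0 (divr_gt0 wb wa) (powR_gt0 _ d10).
exists C; split; first exact: C0.
move=> a l l0 u [[qa cha] bmoa].
pose Kf := fun r : R => omega beta / omega alpha * r `^ (beta - alpha).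
have Kf0 : forall r, 0 < r -> 0 < Kf r.
  by move=> r r0; exact: (mulr_gt0 (divr_gt0 wb wa) (powR_gt0 _ r0)).
have normle : (bmo_norm beta (cube a l) u <= C%:E * bmo_norm alpha (cube a l) u)%E.
  apply: ge_ereal_sup => _ [a' [l' [l'0 [sub ->]]]].
  apply: (@le_trans _ _ (C%:E * ereal_inf [set v | exists c : R,
      v = ((l' `^ (- alpha))%:E * choquet alpha (cube a' l') (fun x => `|u x - c|%R))%E])%E); last first.
    apply: lee_wpmul2l; first by rewrite lee_fin ltW.
    by apply: ereal_sup_ubound; exists a', l'.
  rewrite -lee_pdivrMl//; apply: le_ereal_inf_tmp => _ [c ->].
  rewrite lee_pdivrMl//.
  apply: le_trans (ereal_inf_lbound (x := ((l' `^ (- beta))%:E * choquet beta (cube a' l') (fun x => `|u x - c|%R))%E) _) _.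
    by exists c.
  have hK : l' `^ (- beta) * Kf (l' * (d%:R + 1)) = C * l' `^ (- alpha).
    rewrite /Kf /C powRM; [|exact: ltW l'0|exact: ltW d10].
    have -> : l' `^ (- alpha) = l' `^ (- beta) * l' `^ (beta - alpha).
      rewrite -powRD; last by apply/implyP => _; exact: lt0r_neq0 l'0.
      by rewrite addrA addNr add0r.
    exact: eC_lem.
  apply: (@le_trans _ _ ((l' `^ (- beta))%:E * ((Kf (l' * (d%:R + 1)))%:E * choquet alpha (cube a' l') (fun x => `|u x - c|%R)))%E).
    apply: lee_wpmul2l; first by rewrite lee_fin powR_ge0.
    apply: choquet_cmp => //; first by rewrite mulr_gt0.
    exact: cube_sub_eball.
  by rewrite muleA -EFinM hK EFinM muleA.
have l2 : 0 < 2 * l := mulr_gt0 (ltr0Sn R 1) l0.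
split; last exact: normle.
split; last first.
  apply: le_lt_trans normle _; exact: mul_lt_pinfty (ltW C0) bmoa.
split.
  move=> e e0.
  have R1 : 0 < 2 * l * (d%:R + 1) := mulr_gt0 l2 d10.
  pose K1 := Kf (2 * l * (d%:R + 1)).
  have K10 : 0 < K1 := Kf0 _ R1.
  have [Op [oO [hO cO]]] := qa (e / K1) (divr_gt0 e0 K10).
  exists (Op `&` ball a (2 * l)); split; first by apply: openI; [exact: oO|exact: ball_open].
  split.
    apply: (@le_lt_trans _ _ (K1%:E * hcontent alpha (Op `&` ball a (2 * l)))%E).
      apply: (hcontent_cmp a0 ab R1).
      move=> x [_ Bx]; exact: (ball_sub_eball l2 Bx).
    have hle : (hcontent alpha (Op `&` ball a (2 * l)) <= hcontent alpha Op)%E.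
      by apply: hcontent_le => x [].
    have hge0 := @hcontent_ge0 R d alpha (Op `&` ball a (2 * l)) a0.
    move: (le_lt_trans hle hO) hge0.
    case: (hcontent alpha _) => [r rlt r0| rlt _| _ r0]; last 2 first.
    - by [].
    - by [].
    rewrite -EFinM lte_fin; move: rlt; rewrite lte_fin => rlt.
    rewrite [X in _ < X](_ : e = K1 * (e / K1)); last first.
      by rewrite mulrC divfK; last exact: lt0r_neq0 K10.
    by rewrite ltr_pM2l; [exact: rlt|exact: K10].
  have -> : cube a l `\` (Op `&` ball a (2 * l)) = cube a l `\` Op.
    apply/seteqP; split => x [Qx nO]; (split; first exact: Qx).
      by move=> Ox; apply: nO; split; [exact: Ox|exact: (cube_sub_ball l0)].
    by move=> [Ox Bx]; exact: nO Ox.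
  exact: cO.
have R2 : 0 < l * (d%:R + 1) := mulr_gt0 l0 d10.
apply: (@le_lt_trans _ _ ((Kf (l * (d%:R + 1)))%:E * choquet alpha (cube a l) (fun x => `|u x|%R))%E).
  apply: (choquet_cmp _ a0 ab R2).
  exact: cube_sub_eball.
apply: mul_lt_pinfty; [exact: ltW (Kf0 _ R2)|exact: cha].
Qed.
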